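(* Let $p\ge 3$ be a prime, $n\ge 2$ an integer, and $N=p^nN_1$, where either $N_1=1$ or $N_1=q_1q_2\cdots q_r$ with $q_1,\dots,q_r$ distinct primes different from $p$ such that $(q_i-1)\mid(p-1)$ for every $i$. Let $a,b$ be integers with $a\not\equiv 0,-1 \pmod p$ and $a\not\equiv -1\pmod{q_i}$ for every $i$, and let $\pi(x)=x^p+ax+b$ (such a $\pi$ permutes $\mathbb{Z}_N$). Let $\mathbf{s}$ be a Zadoff–Chu sequence of length $N$. Then (i) the interleaved sequence $\mathbf{s}\circ\pi$ is a CAZAC sequence; (ii) the interleaved sequence $\mathbf{s}\circ\pi^{-1}$ is a CAZAC sequence.
   Context: $\xi_N=e^{-2\pi\sqrt{-1}/N}$, and $\xi_N^{x/2}$ means $e^{-\pi\sqrt{-1}x/N}$. A Zadoff–Chu (ZC) sequence of length $N$ is $\mathbf{s}=(s(0),\dots,s(N-1))$ with $s(k)=\xi_N^{f(k)}$, $f(k)=u\,(k^2+(N\bmod 2)k+2lk)/2$, where $u$ is an integer with $\gcd(u,N)=1$ and $l$ is an arbitrary integer. A polynomial $\pi\in\mathbb{Z}_N[x]$ is a permutation polynomial (PP) over $\mathbb{Z}_N$ if $k\mapsto \pi(k)\bmod N$ is a bijection of $\mathbb{Z}_N=\{0,\dots,N-1\}$; $\pi^{-1}$ denotes the inverse permutation of $\mathbb{Z}_N$. For a permutation $\sigma$ of $\mathbb{Z}_N$, the interleaved sequence $\mathbf{s}\circ\sigma$ has $k$-th term $s(\sigma(k))$. The periodic auto-correlation of a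 length-$N$ sequence $\mathbf{y}$ is $\theta(d)=\sum_{k=0}^{N-1}y(k)y^*(k+d)$ with indices mod $N$. A sequence is CAZAC if all entries have modulus 1 and $\theta(d)=0$ for all $0<d<N$. *)

(* Defs.v *)
From HB Require Import structures.
From mathcomp Require Import all_boot all_order all_algebra.
From mathcomp Require Import reals trigo complex.
Set Implicit Arguments.
Unset Strict Implicit.
Unset Printing Implicit Defensive.
Import Order.TTheory GRing.Theory Num.Theory.
Local Open Scope ring_scope.
Local Open Scope complex_scope.

(* zeta2 N = e^{-pi sqrt(-1)/N} = xi_N^{1/2}; so xi_N^{x/2} = (zeta2 N)^x *)
Definition zeta2 (R : realType) (N : nat) : R[i] :=
  (cos (pi / N%:R)) -i* (sin (pi / N%:R)).

(* Zadoff-Chu sequence: s(k) = xi_N^{f(k)},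
   f(k) = u (k^2 + (N mod 2) k + 2 l k) / 2 *)
Definition zc (R : realType) (N : nat) (u l : int) (k : nat) : R[i] :=
  zeta2 R N ^ (u * ((k ^ 2)%N%:Z + (N %% 2)%N%:Z * k%:Z + 2 * l * k%:Z)).

Definition autocorr (R : realType) (N : nat) (y : nat -> R[i]) (d : nat) : R[i] :=
  \sum_(k < N) y k * (y ((k + d) %% N)%N)^*.

Definition CAZAC (R : realType) (N : nat) (y : nat -> R[i]) : Prop :=
  (forall k, (k < N)%N -> `|y k| = 1) /\
  (forall d, (0 < d)%N -> (d < N)%N -> autocorr N y d = 0).

Definition ppmap (N p : nat) (a b : int) (k : nat) : nat :=
  absz ((k%:Z ^+ p + a * k%:Z + b) %% N%:Z)%Z.

(* Main.v *)
Require Import Defs.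
From HB Require Import structures.
From mathcomp Require Import all_boot all_order all_algebra.
From mathcomp Require Import reals trigo complex.
From mathcomp Require Import ring lra zify.
Import Order.TTheory GRing.Theory Num.Theory.
Local Open Scope ring_scope.
Lemma mid_dvd (d x y : int) n :
  (forall i : nat, (0 < i < n.+1)%N -> (d %| x ^+ (n.+1 - i) * y ^+ i *+ 'C(n.+1, i))%Z) ->
  (d %| (x + y) ^+ n.+1 - x ^+ n.+1 - y ^+ n.+1)%Z.
Proof.
move=> h; rewrite exprDn big_ord_recl big_ord_recr /= subn0 expr0 mulr1 bin0 mulr1n.
rewrite subnn expr0 mul1r binn mulr1n.
have -> : x ^+ n.+1 + (\sum_(i < n) x ^+ (n.+1 - bump 0 i) * y ^+ bump 0 i *+ 'C(n.+1, bump 0 i) +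
   y ^+ n.+1) - x ^+ n.+1 - y ^+ n.+1 =
   \sum_(i < n) x ^+ (n.+1 - bump 0 i) * y ^+ bump 0 i *+ 'C(n.+1, bump 0 i) by ring.
apply: rpred_sum => i _; apply: h.
by rewrite /bump /= add1n ltnS ltn_ord.
Qed.

Lemma G1 (x y : int) n : (x * y %| (x + y) ^+ n.+1 - x ^+ n.+1 - y ^+ n.+1)%Z.
Proof.
apply: mid_dvd => i /andP[i0 iN].
rewrite -mulr_natr; apply: dvdz_mulr; apply: dvdz_mul.
  by apply: dvdz_exp => //; rewrite subn_gt0.
by apply: dvdz_exp.
Qed.

Lemma G2 (x y : int) p : prime p -> (p%:Z * x * y %| (x + y) ^+ p - x ^+ p - y ^+ p)%Z.
Proof.
move=> pp; have := prime_gt1 pp; case: p pp => // p pp _.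
apply: mid_dvd => i /andP[i0 iN].
rewrite -mulr_natr mulrC -mulrA; apply: dvdz_mul.
  by rewrite natz dvdzE /= prime_dvd_bin // i0.
apply: dvdz_mul.
  by apply: dvdz_exp => //; rewrite subn_gt0.
by apply: dvdz_exp.
Qed.

Lemma D2 p (x h1 h2 : int) : prime p ->
  (p%:Z * h1 * h2 %| (x + h1 + h2) ^+ p - (x + h1) ^+ p - (x + h2) ^+ p + x ^+ p)%Z.
Proof.
move=> pp.
have -> : (x + h1 + h2) ^+ p - (x + h1) ^+ p - (x + h2) ^+ p + x ^+ p =
  \sum_(i < p.+1) (x ^+ (p - i) * ((h1 + h2) ^+ i - h1 ^+ i - h2 ^+ i)) *+ 'C(p, i) + x ^+ p.
  rewrite -(addrA x h1 h2) !exprDn; congr (_ + _); rewrite -!sumrB; apply: eq_bigr => i _.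
  by rewrite -!mulrnBl; congr (_ *+ _); ring.
have := prime_gt1 pp; case: p pp => // p pp _.
rewrite big_ord_recl /= subn0 !expr0 bin0 mulr1n.
rewrite big_ord_recr /= subnn expr0 mul1r binn mulr1n.
have hr : forall A B c : int, c * (1 - 1 - 1) + (A + B) + c = A + B by move=> *; ring.
rewrite hr.
apply: rpredD.
  apply: rpred_sum => i _.
  rewrite /bump /= add1n -(mulrA _ h1 h2) -mulr_natr mulrC; apply: dvdz_mul.
    by rewrite natz dvdzE /= prime_dvd_bin //= ltnS ltn_ord.
  by apply: dvdz_mull; apply: G1.
rewrite /bump /= add1n; exact: G2.
Qed.

Lemma dvd_powdiff (d x y : int) k : (d %| x - y)%Z -> (d %| x ^+ k - y ^+ k)%Z.
Proof. by move=> h; rewrite subrXX; apply: dvdz_mulr. Qed.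

Lemma euclidz (r : nat) (m k : int) : prime r -> (r%:Z %| m * k)%Z -> (r%:Z %| m)%Z \/ (r%:Z %| k)%Z.
Proof. by move=> pr; rewrite !dvdzE abszM Euclid_dvdM // => /orP. Qed.

Lemma fermat (r : nat) (x : int) : prime r -> (r%:Z %| x ^+ r - x)%Z.
Proof.
move=> pr.
have hn : forall k : nat, (r%:Z %| k%:Z ^+ r - k%:Z)%Z.
  elim=> [|k IH]; first by rewrite expr0n /= eqn0Ngt prime_gt0 // subrr dvdz0.
  have := @G2 k%:Z 1 r pr; rewrite mulr1 => /(dvdz_trans (dvdz_mulr _ (dvdzz _))) h.
  have -> : k.+1%:Z ^+ r - k.+1%:Z = ((k%:Z + 1) ^+ r - k%:Z ^+ r - 1 ^+ r) + (k%:Z ^+ r - k%:Z).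
    by rewrite expr1n -addn1 PoszD; ring.
  by rewrite rpredD.
have e : (r%:Z %| x - (x %% r%:Z)%Z)%Z.
  by apply/dvdzP; exists (x %/ r%:Z)%Z; rewrite {1}(divz_eq x r%:Z); ring.
have r0 : r%:Z != 0 by rewrite eqz_nat -lt0n prime_gt0.
have ge := modz_ge0 x r0.
move: e ge; set y := (x %% r%:Z)%Z => e ge.
have -> : x ^+ r - x = (x ^+ r - y ^+ r) + (y ^+ r - y) + (y - x) by ring.
apply: rpredD; first apply: rpredD.
- exact: dvd_powdiff.
- by rewrite -(gez0_abs ge); apply: hn.
- by rewrite -opprB rpredN.
Qed.

Lemma fermat_gen (r p : nat) (x : int) : prime r -> (r.-1 %| p.-1)%N -> (0 < p)%N ->
  (r%:Z %| x ^+ p - x)%Z.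
Proof.
move=> pr /dvdnP[t ht] p0.
have -> : p = (t * r.-1).+1 by rewrite -ht prednK.
elim: t {ht} => [|t IH]; first by rewrite mul0n expr1 subrr dvdz0.
have hr : r = r.-1.+1 by rewrite prednK // prime_gt0.
have -> : x ^+ (t.+1 * r.-1).+1 - x = (x ^+ (t * r.-1).+1 - x) * x ^+ r.-1 + (x ^+ r - x).
  have e1 : x ^+ (t.+1 * r.-1).+1 = x ^+ (t * r.-1).+1 * x ^+ r.-1.
    by rewrite -exprD mulSn addnC addSn.
  have e2 : x ^+ r = x * x ^+ r.-1 by rewrite -exprS -hr.
  rewrite e1 e2; ring.
by rewrite rpredD // ?dvdz_mulr // fermat.
Qed.

Definition Pz (p : nat) (a b x : int) : int := x ^+ p + a * x + b.

Lemma Pz_cong p a b (N X Y : int) : (N %| X - Y)%Z -> (N %| Pz p a b X - Pz p a b Y)%Z.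
Proof.
move=> h; have -> : Pz p a b X - Pz p a b Y = (X ^+ p - Y ^+ p) + a * (X - Y) by rewrite /Pz; ring.
by rewrite rpredD // ?dvdz_mull // dvd_powdiff.
Qed.

Lemma Ez_mod (r p : nat) a b (x h : int) : (forall z, (r%:Z %| z ^+ p - z)%Z) ->
  (r%:Z %| (Pz p a b (x + h) - Pz p a b x) - (1 + a) * h)%Z.
Proof.
move=> hf.
have -> : (Pz p a b (x + h) - Pz p a b x) - (1 + a) * h =
  ((x + h) ^+ p - (x + h)) - (x ^+ p - x) by rewrite /Pz; ring.
by apply: rpredB; exact: hf.
Qed.

Lemma D2f (r p : nat) (x h1 h2 : int) : (forall z, (r%:Z %| z ^+ p - z)%Z) ->
  (r%:Z %| (x + h1 + h2) ^+ p - (x + h1) ^+ p - (x + h2) ^+ p + x ^+ p)%Z.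
Proof.
move=> hf.
have -> : (x + h1 + h2) ^+ p - (x + h1) ^+ p - (x + h2) ^+ p + x ^+ p =
  ((x + h1 + h2) ^+ p - (x + h1 + h2)) - ((x + h1) ^+ p - (x + h1))
  - ((x + h2) ^+ p - (x + h2)) + (x ^+ p - x) by ring.
apply: rpredD; last exact: hf.
by do 2 (apply: rpredB; last exact: hf); exact: hf.
Qed.

Lemma G2f (r p : nat) (x h : int) : (forall z, (r%:Z %| z ^+ p - z)%Z) ->
  (r%:Z %| (x + h) ^+ p - x ^+ p - h ^+ p)%Z.
Proof.
move=> hf.
have -> : (x + h) ^+ p - x ^+ p - h ^+ p =
  ((x + h) ^+ p - (x + h)) - (x ^+ p - x) - (h ^+ p - h) by ring.
by do 2 (apply: rpredB; last exact: hf); exact: hf.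
Qed.

Lemma pow_unit (r p : nat) (z : int) : (forall z, (r%:Z %| z ^+ p - z)%Z) -> prime r -> (0 < p)%N ->
  ~~ (r%:Z %| z)%Z -> (r%:Z %| z ^+ p.-1 - 1)%Z.
Proof.
move=> hf pr p0 nz.
have : (r%:Z %| z * (z ^+ p.-1 - 1))%Z.
  by rewrite mulrBr mulr1 -exprS prednK.
by case/(@euclidz r _ _ pr) => // h; rewrite h in nz.
Qed.

Lemma nondvd1 (r p : nat) (a z : int) : (forall z, (r%:Z %| z ^+ p - z)%Z) -> prime r -> (0 < p)%N ->
  ~~ (r%:Z %| z)%Z -> ~~ (r%:Z %| 1 + a)%Z -> ~~ (r%:Z %| z ^+ p.-1 + a)%Z.
Proof.
move=> hf pr p0 nz na; apply/negP => h; move/negP: na; apply.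
have -> : 1 + a = (z ^+ p.-1 + a) - (z ^+ p.-1 - 1) by ring.
by rewrite rpredB // pow_unit.
Qed.

Lemma nondvd0 (r p : nat) (a z : int) : (1 < p)%N ->
  (r%:Z %| z)%Z -> ~~ (r%:Z %| a)%Z -> ~~ (r%:Z %| z ^+ p.-1 + a)%Z.
Proof.
move=> p1 hz na; apply/negP => h; move/negP: na; apply.
have -> : a = (z ^+ p.-1 + a) - z ^+ p.-1 by ring.
by rewrite rpredB // dvdz_exp // -ltnS prednK // ltnW.
Qed.

Lemma Efact (p : nat) a b (x h : int) : prime p ->
  exists t : int, Pz p a b (x + h) - Pz p a b x = h * (h ^+ p.-1 + a + p%:Z * t).
Proof.
move=> pp; have /dvdzP[s hs] := @G2 x h p pp.
exists (s * x).
have e : Pz p a b (x + h) - Pz p a b x = ((x + h) ^+ p - x ^+ p - h ^+ p) + h ^+ p + a * h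
  by rewrite /Pz; ring.
rewrite e hs.
have -> : h ^+ p = h * h ^+ p.-1 by rewrite -exprS prednK // prime_gt0.
ring.
Qed.

Lemma PoszX' (m k : nat) : ((m ^ k)%N)%:Z = (m%:Z) ^+ k.
Proof. by rewrite -!natz natrX. Qed.

Lemma coprime_prod_primes (q : nat) (s : seq nat) : prime q -> all prime s -> q \notin s ->
  coprime q (\prod_(i <- s) i).
Proof.
move=> pq; elim: s => [|x s IH]; first by rewrite big_nil coprimen1.
rewrite big_cons /= inE negb_or => /andP[px ps] /andP[qx qs].
rewrite coprimeMr IH // andbT prime_coprime // dvdn_prime2 //.
Qed.

Lemma prod_dvd (qs : seq nat) (z : nat) : uniq qs -> all prime qs ->
  (forall q, q \in qs -> (q %| z)%N) -> (\prod_(i <- qs) i %| z)%N.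
Proof.
elim: qs => [|x s IH]; first by rewrite big_nil dvd1n.
rewrite /= => /andP[xs us] /andP[px ps] h.
rewrite big_cons Gauss_dvd ?coprime_prod_primes // h ?inE ?eqxx // IH // => q qs.
by apply: h; rewrite inE qs orbT.
Qed.

Lemma prod_split (qs : seq nat) (q : nat) : uniq qs -> all prime qs -> q \in qs ->
  \prod_(i <- qs) i = (q * \prod_(i <- rem q qs) i)%N /\ coprime q (\prod_(i <- rem q qs) i).
Proof.
move=> u ap qin; split; first by rewrite (big_rem q qin).
apply: coprime_prod_primes.
- by move/allP: ap; apply.
- by apply/allP => x /mem_rem; move/allP: ap; apply.
- by rewrite mem_rem_uniqF.
Qed.

Lemma coprimez_of (r : nat) (w : int) : prime r -> ~~ (r%:Z %| w)%Z -> forall k, coprimez ((r%:Z) ^+ k) w.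
Proof.
move=> pr nw k; rewrite coprimezE abszX /=.
by apply: coprimeXl; rewrite prime_coprime.
Qed.

Lemma not_dvd_u (r : nat) (u N : int) : prime r -> coprimez u N -> (r%:Z %| N)%Z -> ~~ (r%:Z %| u)%Z.
Proof.
move=> pr cu rN; apply/negP => ru.
have : (r%:Z %| gcdz u N)%Z by rewrite dvdz_gcd ru.
move: cu; rewrite /coprimez => /eqP ->; rewrite dvdzE /= dvdn1 => /eqP r1.
by move: pr; rewrite r1.
Qed.

Lemma euclid3 (r : nat) (x y z : int) : prime r -> ~~ (r%:Z %| x)%Z -> ~~ (r%:Z %| y)%Z -> ~~ (r%:Z %| z)%Z ->
  ~~ (r%:Z %| x * y * z)%Z.
Proof.
move=> pr hx hy hz; apply/negP => /(@euclidz r _ _ pr) [/(@euclidz r _ _ pr) [|]|]; apply/negP => //.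
Qed.

Lemma U_r (r p : nat) (a z : int) : prime r -> (1 < p)%N -> (forall z, (r%:Z %| z ^+ p - z)%Z) ->
  ~~ (r%:Z %| a)%Z -> ~~ (r%:Z %| 1 + a)%Z -> ~~ (r%:Z %| z ^+ p.-1 + a)%Z.
Proof.
move=> pr p1 hf na na1; case hz: (r%:Z %| z)%Z.
  exact: nondvd0.
by apply: nondvd1 => //; [exact: ltnW | rewrite hz].
Qed.

Lemma PzD2 p a b (x h1 h2 : int) :
  Pz p a b (x + h1 + h2) - Pz p a b (x + h1) - (Pz p a b (x + h2) - Pz p a b x) =
  (x + h1 + h2) ^+ p - (x + h1) ^+ p - (x + h2) ^+ p + x ^+ p.
Proof. rewrite /Pz; ring. Qed.

Lemma PzS0 p a b (S : int) : (0 < p)%N -> Pz p a b S - Pz p a b 0 = S * (S ^+ p.-1 + a).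
Proof.
move=> p0; have z0 : (0:int) ^+ p = 0 by rewrite -(prednK p0) exprS mul0r.
rewrite /Pz z0.
have -> : S ^+ p = S * S ^+ p.-1 by rewrite -exprS prednK.
ring.
Qed.

Lemma PzE0 p a b (k h : int) :
  (Pz p a b (k + h) - Pz p a b k) - (Pz p a b h - Pz p a b 0) = (k + h) ^+ p - k ^+ p - h ^+ p + 0 ^+ p.
Proof. rewrite /Pz; ring. Qed.

Section PCase.
End PCase.

Lemma pD2 (p j : nat) (N S k h : int) : prime p -> N = p%:Z ^+ j * (p%:Z * S) ->
  (p%:Z ^+ j %| h)%Z -> (N %| (k + h + S) ^+ p - (k + h) ^+ p - (k + S) ^+ p + k ^+ p)%Z.
Proof.
move=> pp NZ hj.
apply: dvdz_trans (@D2 p k h S pp).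
by rewrite NZ (mulrC (p%:Z) h) -mulrA dvdz_mul.
Qed.

Lemma pI2 (p j : nat) a b (N S d k : int) : prime p -> N = p%:Z ^+ j * (p%:Z * S) ->
  (p%:Z ^+ j %| d)%Z ->
  (N %| (Pz p a b (k + S) - Pz p a b k) * (Pz p a b (k + d) - Pz p a b k)
        - (Pz p a b S - Pz p a b 0) * (Pz p a b d - Pz p a b 0))%Z.
Proof.
move=> pp NZ hj.
have p0 := prime_gt0 pp.
have z0 : (0:int) ^+ p = 0 by rewrite -(prednK p0) exprS mul0r.
set ak := Pz p a b (k + S) - Pz p a b k; set ek := Pz p a b (k + d) - Pz p a b k.
set a0 := Pz p a b S - Pz p a b 0; set e0 := Pz p a b d - Pz p a b 0.
have -> : ak * ek - a0 * e0 = (ak - a0) * ek + a0 * (ek - e0) by ring.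
have h1 : (p%:Z * S %| ak - a0)%Z.
  rewrite /ak /a0 PzE0 z0 addr0; apply: dvdz_trans (@G2 k S p pp).
  by rewrite -mulrA mulrCA dvdz_mull.
have h2 : (d %| ek)%Z.
  have -> : ek = ((k + d) ^+ p - k ^+ p - d ^+ p) + d * (d ^+ p.-1 + a).
    have e : d ^+ p = d * d ^+ p.-1 by rewrite -exprS prednK.
    by rewrite /ek /Pz e; ring.
  apply: rpredD; last exact: dvdz_mulr.
  apply: dvdz_trans (@G2 k d p pp).
  by rewrite mulrC dvdz_mulr.
have h3 : (S %| a0)%Z by rewrite /a0 PzS0 // dvdz_mulr.
have h4 : (p%:Z * d %| ek - e0)%Z.
  rewrite /ek /e0 PzE0 z0 addr0; apply: dvdz_trans (@G2 k d p pp).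
  by rewrite -mulrA mulrCA dvdz_mull.
apply: rpredD.
  rewrite NZ (mulrC (p%:Z ^+ j)); apply: dvdz_mul; first exact: h1.
  exact: dvdz_trans hj h2.
rewrite NZ; have -> : p%:Z ^+ j * (p%:Z * S) = S * (p%:Z * p%:Z ^+ j) by ring.
apply: dvdz_mul; first exact: h3.
apply: dvdz_trans h4; apply: dvdz_mul => //.
Qed.

Lemma pI3 (p j : nat) a b (u N S d : int) : prime p -> N = p%:Z ^+ j * (p%:Z * S) -> S != 0 ->
  ~~ (p%:Z %| a)%Z -> ~~ (p%:Z %| 1 + a)%Z -> ~~ (p%:Z %| u)%Z ->
  ~~ (p%:Z ^+ j.+1 %| d)%Z ->
  ~~ (N %| u * ((Pz p a b S - Pz p a b 0) * (Pz p a b d - Pz p a b 0)))%Z.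
Proof.
move=> pp NZ S0 na na1 nu nd.
have p0 := prime_gt0 pp; have p1 := prime_gt1 pp.
have hf : forall z, (p%:Z %| z ^+ p - z)%Z by move=> z; apply: fermat.
rewrite !PzS0 //.
have -> : u * (S * (S ^+ p.-1 + a) * (d * (d ^+ p.-1 + a))) =
  S * (d * (u * (S ^+ p.-1 + a) * (d ^+ p.-1 + a))) by ring.
have -> : N = S * p%:Z ^+ j.+1 by rewrite NZ exprSr; ring.
rewrite dvdz_mul2l // Gauss_dvdzl //.
apply: coprimez_of => //; apply: euclid3 => //; exact: U_r.
Qed.

Lemma pK1 (p j : nat) a b (N S d x h : int) : prime p -> N = p%:Z ^+ j * (p%:Z * S) ->
  ~~ (p%:Z %| a)%Z -> ~~ (p%:Z %| 1 + a)%Z ->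
  (p%:Z ^+ j %| d)%Z -> ~~ (p%:Z ^+ j.+1 %| d)%Z ->
  (N %| Pz p a b (x + h) - Pz p a b x - d)%Z ->
  (p%:Z ^+ j %| h)%Z && ~~ (p%:Z ^+ j.+1 %| h)%Z.
Proof.
move=> pp NZ na na1 dj nd hN.
have p0 := prime_gt0 pp; have p1 := prime_gt1 pp.
have hf : forall z, (p%:Z %| z ^+ p - z)%Z by move=> z; apply: fermat.
have [t ht] := @Efact p a b x h pp.
rewrite ht in hN.
set G := h ^+ p.-1 + a + p%:Z * t in hN.
have nG : ~~ (p%:Z %| G)%Z.
  apply/negP => hG; move/negP: (@U_r p p a h pp p1 hf na na1); apply.
  have -> : h ^+ p.-1 + a = G - p%:Z * t by rewrite /G; ring.
  by rewrite rpredB // dvdz_mulr.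
have pN : (p%:Z ^+ j.+1 %| N)%Z.
  have -> : N = p%:Z ^+ j.+1 * S by rewrite NZ exprSr; ring.
  exact: dvdz_mulr.
have hNj : (p%:Z ^+ j.+1 %| h * G - d)%Z := dvdz_trans pN hN.
apply/andP; split.
  have : (p%:Z ^+ j %| h * G)%Z.
    have -> : h * G = (h * G - d) + d by ring.
    rewrite rpredD //; apply: dvdz_trans hNj; rewrite exprSr dvdz_mulr //.
  by rewrite Gauss_dvdzl // coprimez_of.
apply/negP => hj1; move/negP: nd; apply.
have -> : d = h * G - (h * G - d) by ring.
by rewrite rpredB // dvdz_mulr.
Qed.

Lemma pK2 (p j : nat) a b (N S d x h x' h' : int) : prime p -> N = p%:Z ^+ j * (p%:Z * S) ->
  ~~ (p%:Z %| a)%Z -> ~~ (p%:Z %| 1 + a)%Z ->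
  (p%:Z ^+ j %| d)%Z -> ~~ (p%:Z ^+ j.+1 %| d)%Z ->
  (N %| Pz p a b (x + h) - Pz p a b x - d)%Z ->
  (N %| Pz p a b (x' + h') - Pz p a b x' - d)%Z ->
  (p%:Z ^+ j.+1 %| h - h')%Z.
Proof.
move=> pp NZ na na1 dj nd hN hN'.
have p0 := prime_gt0 pp; have p1 := prime_gt1 pp.
have hf : forall z, (p%:Z %| z ^+ p - z)%Z by move=> z; apply: fermat.
have /andP[hj _] := @pK1 p j a b N S d x' h' pp NZ na na1 dj nd hN'.
have pN : (p%:Z ^+ j.+1 %| N)%Z.
  have -> : N = p%:Z ^+ j.+1 * S by rewrite NZ exprSr; ring.
  exact: dvdz_mulr.
have pN1 : (p%:Z %| N)%Z by apply: dvdz_trans pN; rewrite exprS dvdz_mulr.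
have m1 : (p%:Z %| (1 + a) * (h - h'))%Z.
  have -> : (1 + a) * (h - h') =
    ((Pz p a b (x' + h') - Pz p a b x' - (1 + a) * h') - (Pz p a b (x + h) - Pz p a b x - (1 + a) * h))
    + ((Pz p a b (x + h) - Pz p a b x - d) - (Pz p a b (x' + h') - Pz p a b x' - d)) by ring.
  apply: rpredD; first by apply: rpredB; apply: Ez_mod.
  by apply: rpredB; apply: dvdz_trans pN1 _.
have m2 : (p%:Z %| h - h')%Z.
  by case/(@euclidz p _ _ pp): m1 => // h1; rewrite h1 in na1.
have [t ht] := @Efact p a b x h pp.
have [t' ht'] := @Efact p a b x' h' pp.
rewrite ht in hN; rewrite ht' in hN'.
set G := h ^+ p.-1 + a + p%:Z * t in hN.
set G' := h' ^+ p.-1 + a + p%:Z * t' in hN'.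
have nG : ~~ (p%:Z %| G)%Z.
  apply/negP => hG; move/negP: (@U_r p p a h pp p1 hf na na1); apply.
  have -> : h ^+ p.-1 + a = G - p%:Z * t by rewrite /G; ring.
  by rewrite rpredB // dvdz_mulr.
have gg : (p%:Z %| G - G')%Z.
  have -> : G - G' = (h ^+ p.-1 - h' ^+ p.-1) + p%:Z * (t - t') by rewrite /G /G'; ring.
  by rewrite rpredD ?dvd_powdiff // dvdz_mulr.
have : (p%:Z ^+ j.+1 %| (h - h') * G)%Z.
  have -> : (h - h') * G = ((h * G - d) - (h' * G' - d)) - h' * (G - G') by ring.
  apply: rpredB; first by apply: rpredB; apply: dvdz_trans pN _.
  by rewrite exprSr; apply: dvdz_mul.
by rewrite Gauss_dvdzl // coprimez_of.
Qed.

Lemma qD2 (p q : nat) (N T k h : int) : prime p -> (forall z, (q%:Z %| z ^+ p - z)%Z) ->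
  N = q%:Z * T -> coprimez q%:Z T ->
  (N %| (k + h + T) ^+ p - (k + h) ^+ p - (k + T) ^+ p + k ^+ p)%Z.
Proof.
move=> pp hf NZ cq.
rewrite NZ Gauss_dvdz // D2f //=.
by apply: dvdz_trans (@D2 p k h T pp); apply: dvdz_mull.
Qed.

Lemma qI2 (p q : nat) a b (N T d k : int) : prime p -> (forall z, (q%:Z %| z ^+ p - z)%Z) ->
  N = q%:Z * T -> coprimez q%:Z T ->
  (N %| (Pz p a b (k + T) - Pz p a b k) * (Pz p a b (k + d) - Pz p a b k)
        - (Pz p a b T - Pz p a b 0) * (Pz p a b d - Pz p a b 0))%Z.
Proof.
move=> pp hf NZ cq.
have p0 := prime_gt0 pp.
have z0 : (0:int) ^+ p = 0 by rewrite -(prednK p0) exprS mul0r.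
set ak := Pz p a b (k + T) - Pz p a b k; set ek := Pz p a b (k + d) - Pz p a b k.
set a0 := Pz p a b T - Pz p a b 0; set e0 := Pz p a b d - Pz p a b 0.
have -> : ak * ek - a0 * e0 = (ak - a0) * ek + a0 * (ek - e0) by ring.
have h1 : (N %| ak - a0)%Z.
  rewrite /ak /a0 PzE0 z0 addr0 NZ Gauss_dvdz // G2f //=.
  by apply: dvdz_trans (@G2 k T p pp); apply: dvdz_mull.
have h3 : (T %| a0)%Z by rewrite /a0 PzS0 // dvdz_mulr.
have h4 : (q%:Z %| ek - e0)%Z by rewrite /ek /e0 PzE0 z0 addr0 G2f.
apply: rpredD; first exact: dvdz_mulr.
by rewrite NZ mulrC; apply: dvdz_mul.
Qed.

Lemma qI3 (p q : nat) a b (u N T d : int) : prime p -> prime q -> (forall z, (q%:Z %| z ^+ p - z)%Z) ->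
  N = q%:Z * T -> T != 0 -> ~~ (q%:Z %| T)%Z ->
  ~~ (q%:Z %| 1 + a)%Z -> ~~ (q%:Z %| u)%Z -> ~~ (q%:Z %| d)%Z ->
  ~~ (N %| u * ((Pz p a b T - Pz p a b 0) * (Pz p a b d - Pz p a b 0)))%Z.
Proof.
move=> pp pq hf NZ T0 nT na1 nu nd.
have p0 := prime_gt0 pp.
rewrite !PzS0 //.
have -> : u * (T * (T ^+ p.-1 + a) * (d * (d ^+ p.-1 + a))) =
  T * (u * (T ^+ p.-1 + a) * (d * (d ^+ p.-1 + a))) by ring.
rewrite NZ (mulrC q%:Z T) dvdz_mul2l //.
apply/negP => /(@euclidz q _ _ pq) [/(@euclidz q _ _ pq) [|]|/(@euclidz q _ _ pq) [|]]; apply/negP => //.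
- exact: nondvd1.
- exact: nondvd1.
Qed.

Lemma qK (p q : nat) a b (N T d x h : int) : (forall z, (q%:Z %| z ^+ p - z)%Z) ->
  N = q%:Z * T ->
  (N %| Pz p a b (x + h) - Pz p a b x - d)%Z -> (q%:Z %| (1 + a) * h - d)%Z.
Proof.
move=> hf NZ hN.
have -> : (1 + a) * h - d = (Pz p a b (x + h) - Pz p a b x - d) -
   ((Pz p a b (x + h) - Pz p a b x) - (1 + a) * h) by ring.
apply: rpredB; last exact: Ez_mod.
by apply: dvdz_trans hN; rewrite NZ dvdz_mulr.
Qed.

Local Open Scope complex_scope.
Lemma cnorm (R : rcfType) (a b : R) : (a -i* b) * (a -i* b)^* = (a^+2 + b^+2) +i* 0.
Proof. apply/eqP; rewrite eq_complex /=; apply/andP; split; apply/eqP; ring. Qed.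

Lemma cmulm (R : rcfType) (a b c d : R) :
  (a -i* b) * (c -i* d) = (a*c - b*d) -i* (a*d + b*c).
Proof. apply/eqP; rewrite eq_complex /=; apply/andP; split; apply/eqP; ring. Qed.

Lemma zconj (R : realType) N : zeta2 R N * (zeta2 R N)^* = 1.
Proof.
rewrite /zeta2 cnorm.
have h : cos (pi / N%:R) ^+ 2 + sin (pi / N%:R) ^+ 2 = 1 :> R by apply: cos2Dsin2.
by rewrite h.
Qed.

Lemma demoivre (R : realType) (x : R) n :
  (cos x -i* sin x) ^+ n = cos (x *+ n) -i* sin (x *+ n).
Proof.
elim: n => [|n IH].
  by rewrite expr0 mulr0n cos0 sin0; apply/eqP; rewrite eq_complex /= oppr0 !eqxx.
rewrite exprS IH cmulm mulrS cosD sinD.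
apply/eqP; rewrite eq_complex /=; apply/andP; split; apply/eqP; ring.
Qed.

Lemma zeta_neq0 (R : realType) N : zeta2 R N != 0.
Proof.
apply/negP => /eqP h; have := zconj R N; rewrite h mul0r => /eqP.
by rewrite eq_sym oner_eq0.
Qed.

Lemma zetaN (R : realType) N : (0 < N)%N -> zeta2 R N ^+ N = -1.
Proof.
move=> N0; rewrite /zeta2 demoivre.
have -> : pi / N%:R *+ N = pi :> R by rewrite -mulr_natr divfK // pnatr_eq0 -lt0n.
rewrite cospi sinpi; apply/eqP; rewrite eq_complex /= oppr0 !eqxx //.
Qed.

Lemma zeta_pm1 (R : realType) N r : (0 < r < N)%N ->
  (zeta2 R N ^+ r != 1) && (zeta2 R N ^+ r != -1).
Proof.
move=> /andP[r0 rN].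
have N0 : (0 < N%:R :> R) by rewrite ltr0n (ltn_trans r0).
have hs : 0 < sin (pi / N%:R *+ r) :> R.
  rewrite sin_gt0_pi // -mulr_natr; apply/andP; split.
    by rewrite mulr_gt0 ?ltr0n // divr_gt0 // pi_gt0.
  by rewrite mulrAC ltr_pdivrMr // ltr_pM2l ?pi_gt0 // ltr_nat.
rewrite /zeta2 demoivre; apply/andP; split; apply/negP; rewrite eq_complex /= => /andP[_ /eqP h]; move: hs.
  move=> hs; lra.
move=> hs; lra.
Qed.

Definition ez (R : realType) (N : nat) (m : int) : R[i] := zeta2 R N ^ m.

Lemma ezD (R : realType) N m k : ez R N (m + k) = ez R N m * ez R N k.
Proof. by rewrite /ez expfzDr // zeta_neq0. Qed.

Lemma ez2N (R : realType) N : (0 < N)%N -> zeta2 R N ^+ (2 * N) = 1.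
Proof. by move=> N0; rewrite mulnC exprM zetaN // expr2 mulrNN mulr1. Qed.

Lemma ez_per (R : realType) N m k : (0 < N)%N ->
  ((2 * N)%:Z %| m - k)%Z -> ez R N m = ez R N k.
Proof.
move=> N0 /dvdzP[t ht].
have -> : m = k + (2 * N)%:Z * t by rewrite mulrC -ht addrC subrK.
by rewrite ezD /ez -exprz_exp -exprnP ez2N // exp1rz mulr1.
Qed.

Lemma zeta_conjV (R : realType) N : (zeta2 R N)^* = (zeta2 R N)^-1.
Proof.
by apply: (mulfI (zeta_neq0 R N)); rewrite zconj mulfV // zeta_neq0.
Qed.

Lemma ez_conj (R : realType) N m : (ez R N m)^* = ez R N (- m).
Proof.
rewrite /ez.
have -> : (zeta2 R N ^ m)^* = ((zeta2 R N)^-1) ^ m.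
  rewrite -zeta_conjV.
  exact: (fmorphXz (complex_conjc__canonical__GRing_RMorphism R)).
by rewrite exprz_inv.
Qed.

Lemma ez_mulconj (R : realType) N m : ez R N m * conjc (ez R N m) = 1.
Proof. by rewrite ez_conj -ezD subrr /ez expr0z. Qed.

Lemma ez_norm (R : realType) N m : `|ez R N m| = 1.
Proof.
have h : `|ez R N m| ^+ 2 = 1 by rewrite sqr_normc ez_mulconj.
move/eqP: h; rewrite sqrf_eq1 => /orP[/eqP //|/eqP h].
by have := normr_ge0 (ez R N m); rewrite h ler0N1.
Qed.

Lemma ez_prim (R : realType) N m : (0 < N)%N -> ez R N (2 * m) = 1 -> (N%:Z %| m)%Z.
Proof.
move=> N0 h.
have Nz : N%:Z != 0 by rewrite eqz_nat -lt0n.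
set r := (m %% N%:Z)%Z.
have r0 : 0 <= r by apply: modz_ge0.
have rN : r < N%:Z by apply: ltz_pmod; rewrite ltz_nat.
have e : ez R N (2 * m) = ez R N (2 * r).
  apply: ez_per => //; apply/dvdzP; exists (m %/ N%:Z)%Z.
  rewrite /r /modz PoszM; set q := (m %/ _)%Z; have -> : Posz 2 = 2 by []. ring.
move: h; rewrite e.
have rE : r = `|r|%N%:Z by rewrite gez0_abs.
rewrite rE /ez -PoszM -exprnP mulnC exprM => /eqP; rewrite sqrf_eq1.
have [r00|rpos] := posnP `|r|%N.
  by move=> _; apply/dvdz_mod0P; rewrite -/r rE r00.
have rN' : (`|r| < N)%N by rewrite -ltz_nat -rE.
by have := @zeta_pm1 R N `|r|%N; rewrite rpos rN' /= => /(_ isT) /andP[/negbTE -> /negbTE ->].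
Qed.

Lemma sum_shift1 (R : realType) (g : nat -> R[i]) N :
  (forall k, g (k + N)%N = g k) -> \sum_(k < N) g (k + 1)%N = \sum_(k < N) g k.
Proof.
case: N => [|N] hg; first by rewrite !big_ord0.
rewrite big_ord_recr big_ord_recl /=.
have -> : g (N + 1)%N = g 0%N by rewrite addn1 -(hg 0%N) add0n.
rewrite addrC; congr (_ + _); apply: eq_bigr => i _.
by rewrite /bump /= add1n addn1.
Qed.

Lemma sum_shift (R : realType) (g : nat -> R[i]) N S :
  (forall k, g (k + N)%N = g k) -> \sum_(k < N) g (k + S)%N = \sum_(k < N) g k.
Proof.
move=> hg; elim: S => [|S IH].
  by apply: eq_bigr => i _; rewrite addn0.
rewrite -IH -(@sum_shift1 R (fun k => g (k + S)%N)).
  by apply: eq_bigr => i _; rewrite addnS addn1 addSn.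
by move=> k; rewrite addnAC hg.
Qed.

Lemma sum_zero (R : realType) (g : nat -> R[i]) N S c :
  (forall k, g (k + N)%N = g k) -> (forall k, g (k + S)%N = c * g k) -> c != 1 ->
  \sum_(k < N) g k = 0.
Proof.
move=> hN hS c1.
have h : \sum_(k < N) g k = c * \sum_(k < N) g k.
  by rewrite -{1}(@sum_shift R g N S hN) mulr_sumr; apply: eq_bigr => i _; rewrite hS.
have : (c - 1) * \sum_(k < N) g k = 0 by rewrite mulrBl -h mul1r subrr.
by move/eqP; rewrite mulf_eq0 subr_eq0 (negbTE c1) /= => /eqP.
Qed.

Definition Fz (c X : int) : int := X ^+ 2 + c * X.

Lemma even_tt1 (t : int) : (2 %| t * (t - 1))%Z.
Proof.
have h := divz_eq t 2; have h0 := modz_ge0 t (isT : (2:int) != 0).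
have h1 := ltz_pmod t (isT : (0:int) < 2).
move: h h0 h1; set q := (t %/ 2)%Z; set r := (t %% 2)%Z => h h0 h1.
have : r = 0 \/ r = 1 by lia.
case=> e; rewrite e in h; apply/dvdzP.
  by exists (q * (t - 1)); rewrite h; ring.
by exists (t * q); rewrite {2}h; ring.
Qed.

Lemma Fper (N : nat) (c X Y : int) : (2 %| N%:Z + c)%Z -> (N%:Z %| X - Y)%Z ->
  ((2 * N)%:Z %| Fz c X - Fz c Y)%Z.
Proof.
move=> /dvdzP[s hs] /dvdzP[t ht].
have -> : X = Y + t * N by rewrite -ht; ring.
have /dvdzP[w hw] := even_tt1 t.
apply/dvdzP; exists (Y * t + N%:Z * w + s * t).
have -> : c = s * 2 - N%:Z by rewrite -hs; ring.
rewrite /Fz PoszM.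
have -> : Posz 2 = 2 by [].
have e : (Y + t * N%:Z) ^+ 2 + (s * 2 - N%:Z) * (Y + t * N%:Z) - (Y ^+ 2 + (s * 2 - N%:Z) * Y)
  = 2 * N%:Z * Y * t + N%:Z * N%:Z * (t * (t - 1)) + 2 * N%:Z * s * t by ring.
rewrite e hw; ring.
Qed.

Lemma core_i (R : realType) (N S : nat) (u c d : int) (P : int -> int) :
  (0 < N)%N -> (2 %| N%:Z + c)%Z ->
  (forall X Y, (N%:Z %| X - Y)%Z -> (N%:Z %| P X - P Y)%Z) ->
  (forall k : int, (N%:Z %| (P (k + d + S%:Z) - P (k + d)) - (P (k + S%:Z) - P k))%Z) ->
  (forall k : int, (N%:Z %| (P (k + S%:Z) - P k) * (P (k + d) - P k)
                             - (P S%:Z - P 0) * (P d - P 0))%Z) ->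
  ~~ (N%:Z %| u * ((P S%:Z - P 0) * (P d - P 0)))%Z ->
  \sum_(k < N) ez R N (u * Fz c (P k) - u * Fz c (P (k%:Z + d))) = 0.
Proof.
move=> N0 hc hP h1 h2 h3.
set w := - (u * ((P S%:Z - P 0) * (P d - P 0))).
apply: (@sum_zero R (fun k : nat => ez R N (u * Fz c (P k) - u * Fz c (P (k%:Z + d)))) N S (ez R N (2 * w))).
- move=> k; apply: ez_per => //.
  have e : u * Fz c (P (k + N)%N) - u * Fz c (P ((k + N)%N%:Z + d)) - (u * Fz c (P k) - u * Fz c (P (k%:Z + d)))
    = u * (Fz c (P (k + N)%N) - Fz c (P k)) - u * (Fz c (P ((k + N)%N%:Z + d)) - Fz c (P (k%:Z + d))) by ring.
  rewrite e; apply: rpredB; apply: dvdz_mull; apply: Fper => //; apply: hP.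
    by rewrite PoszD; apply/dvdzP; exists 1; ring.
  by rewrite PoszD; apply/dvdzP; exists 1; ring.
- move=> k; rewrite -ezD; apply: ez_per => //.
  set X := P k; set Y := P (k%:Z + d).
  set al := P (k%:Z + S%:Z) - X; set be := P (k%:Z + d + S%:Z) - Y.
  have eX : P (k + S)%N = X + al by rewrite /al PoszD; ring.
  have eY : P ((k + S)%N%:Z + d) = Y + be by rewrite /be PoszD addrAC; ring.
  rewrite eX eY.
  have e : u * Fz c (X + al) - u * Fz c (Y + be) - (2 * w + (u * Fz c X - u * Fz c Y)) =
    u * (Fz c al - Fz c be) - (2 * u) * (al * (Y - X) - (P S%:Z - P 0) * (P d - P 0))
    - (2 * u * Y) * (be - al) by rewrite /w /Fz; ring.
  rewrite e PoszM; apply: rpredB; first apply: rpredB.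
  + apply: dvdz_mull; apply: Fper => //.
    by rewrite -opprB rpredN; apply: h1.
  + apply: dvdz_mul; first by apply: dvdz_mulr; apply: dvdzz.
    exact: h2.
  + apply: dvdz_mul; first by rewrite -mulrA; apply: dvdz_mulr; apply: dvdzz.
    exact: h1.
- apply/negP => /eqP /(@ez_prim R N _ N0); rewrite /w rpredN.
  by apply/negP.
Qed.

Lemma core_ii (R : realType) (N S : nat) (u c : int) (y : nat -> nat) :
  (0 < N)%N -> (2 %| N%:Z + c)%Z ->
  (forall x, y (x + N)%N = y x) ->
  (forall x, (N%:Z %| (y (x + S)%N)%:Z - ((y x)%:Z + S%:Z))%Z) ->
  (forall x : nat, (N%:Z %| S%:Z * (((y x)%:Z - x%:Z) - (y 0%N)%:Z))%Z) ->
  ~~ (N%:Z %| u * (S%:Z * (y 0%N)%:Z))%Z ->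
  \sum_(x < N) ez R N (u * Fz c x%:Z - u * Fz c (y x)%:Z) = 0.
Proof.
move=> N0 hc hy h1 h2 h3.
set w := - (u * (S%:Z * (y 0%N)%:Z)).
apply: (@sum_zero R (fun x : nat => ez R N (u * Fz c x%:Z - u * Fz c (y x)%:Z)) N S (ez R N (2 * w))).
- move=> k /=; apply: ez_per => //; rewrite hy.
  have e : u * Fz c (k + N)%N - u * Fz c (y k) - (u * Fz c k - u * Fz c (y k))
    = u * (Fz c (k + N)%N - Fz c k) by ring.
  rewrite e; apply: dvdz_mull; apply: Fper => //.
  by rewrite PoszD; apply/dvdzP; exists 1; ring.
- move=> k /=; rewrite -ezD; apply: ez_per => //.
  set Y := (y k)%:Z; set Y' := (y (k + S)%N)%:Z.
  have e : u * Fz c (k + S)%N - u * Fz c Y' - (2 * w + (u * Fz c k - u * Fz c Y)) =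
    - u * (Fz c Y' - Fz c (Y + S%:Z)) - (2 * u) * (S%:Z * ((Y - k%:Z) - (y 0%N)%:Z))
    by rewrite /w /Fz PoszD; ring.
  rewrite e PoszM; apply: rpredB.
  + apply: dvdz_mull; apply: Fper => //; exact: h1.
  + apply: dvdz_mul; first by apply: dvdz_mulr; apply: dvdzz.
    exact: h2.
- apply/negP => /eqP /(@ez_prim R N _ N0); rewrite /w rpredN.
  by apply/negP.
Qed.

Lemma ez_conj' (R : realType) N m : Num.conj (ez R N m) = ez R N (- m).
Proof. exact: ez_conj. Qed.

Local Close Scope complex_scope.

Lemma PP_int N p a b k : (0 < N)%N -> (ppmap N p a b k)%:Z = (Pz p a b k%:Z %% N%:Z)%Z.
Proof.
move=> N0; rewrite /ppmap gez0_abs //; apply: modz_ge0.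
by rewrite eqz_nat -lt0n.
Qed.

Lemma PP_lt N p a b k : (0 < N)%N -> (ppmap N p a b k < N)%N.
Proof.
move=> N0; rewrite -ltz_nat PP_int //; apply: ltz_pmod; by rewrite ltz_nat.
Qed.

Lemma PP_cong N p a b k : (0 < N)%N -> (N%:Z %| (ppmap N p a b k)%:Z - Pz p a b k%:Z)%Z.
Proof.
move=> N0; rewrite PP_int //; apply/dvdzP; exists (- (Pz p a b k %/ N%:Z)%Z).
by rewrite /modz; ring.
Qed.

Lemma PP_eq N p a b k1 k2 : (0 < N)%N ->
  (ppmap N p a b k1 = ppmap N p a b k2) <-> (N%:Z %| Pz p a b k1%:Z - Pz p a b k2%:Z)%Z.
Proof.
move=> N0; split.
  move=> e; rewrite -eqz_mod_dvd; apply/eqP.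
  by rewrite -!PP_int // e.
rewrite -eqz_mod_dvd => /eqP e; apply/eqP; rewrite -eqz_nat !PP_int // e; exact: eqxx.
Qed.

Lemma PP_eqd N p a b w x (d : nat) : (0 < N)%N ->
  (ppmap N p a b w = (ppmap N p a b x + d) %% N)%N <->
  (N%:Z %| Pz p a b w%:Z - Pz p a b x%:Z - d%:Z)%Z.
Proof.
move=> N0.
have key : (N%:Z %| Pz p a b w%:Z - Pz p a b x%:Z - d%:Z)%Z =
           (N%:Z %| Pz p a b w%:Z - (ppmap N p a b x + d)%N%:Z)%Z.
  have -> : Pz p a b w%:Z - Pz p a b x%:Z - d%:Z =
    (Pz p a b w%:Z - (ppmap N p a b x + d)%N%:Z) + ((ppmap N p a b x)%:Z - Pz p a b x%:Z).
    by rewrite PoszD; ring.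
  apply/idP/idP => h.
    have -> : Pz p a b w%:Z - (ppmap N p a b x + d)%N%:Z =
      (Pz p a b w%:Z - (ppmap N p a b x + d)%N%:Z + ((ppmap N p a b x)%:Z - Pz p a b x%:Z))
      - ((ppmap N p a b x)%:Z - Pz p a b x%:Z) by ring.
    by rewrite rpredB // PP_cong.
  by rewrite rpredD // PP_cong.
rewrite key -eqz_mod_dvd; split.
  by move=> e; apply/eqP; rewrite -PP_int // e modz_nat.
move=> /eqP e; apply/eqP; rewrite -eqz_nat PP_int // e modz_nat //.
Qed.

Lemma zc_ez (R : realType) N u l (m : nat) :
  zc R N u l m = ez R N (u * Fz ((N %% 2)%N%:Z + 2 * l) m%:Z).
Proof. by rewrite /zc /ez /Fz PoszX'; congr (_ ^ _); ring. Qed.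

Lemma par2 (N : nat) (l : int) : (2 %| N%:Z + ((N %% 2)%N%:Z + 2 * l))%Z.
Proof.
apply/dvdzP; exists ((N %/ 2)%N%:Z + (N %% 2)%N%:Z + l).
rewrite {1}(divn_eq N 2) PoszD PoszM; have -> : Posz 2 = 2 by []. ring.
Qed.

Lemma prod_primes_gt0 (s : seq nat) : all prime s -> (0 < \prod_(i <- s) i)%N.
Proof.
elim: s => [|x s IH]; first by rewrite big_nil.
by rewrite /= big_cons => /andP[px ps]; rewrite muln_gt0 prime_gt0 // IH.
Qed.

Lemma inj_core (p n : nat) (qs : seq nat) a b (x y : nat) :
  prime p -> uniq qs -> all prime qs -> p \notin qs ->
  (forall q, q \in qs -> forall z : int, (q%:Z %| z ^+ p - z)%Z) ->
  (forall q, q \in qs -> ~~ (q%:Z %| 1 + a)%Z) ->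
  ~~ (p%:Z %| a)%Z -> ~~ (p%:Z %| 1 + a)%Z ->
  (x < p ^ n * \prod_(q <- qs) q)%N -> (y < p ^ n * \prod_(q <- qs) q)%N ->
  ((p ^ n * \prod_(q <- qs) q)%N%:Z %| Pz p a b y%:Z - Pz p a b x%:Z)%Z -> x = y.
Proof.
move=> pp uq aq pq hfq nq1 na na1 xN yN hN.
set M := \prod_(q <- qs) q in xN yN hN.
set N := (p ^ n * M)%N in xN yN hN.
have p1 := prime_gt1 pp.
have hfp : forall z : int, (p%:Z %| z ^+ p - z)%Z by move=> z; apply: fermat.
set dl := y%:Z - x%:Z.
have eE : Pz p a b (x%:Z + dl) - Pz p a b x%:Z = Pz p a b y%:Z - Pz p a b x%:Z by rewrite /dl; congr (Pz _ _ _ _ - _); ring.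
rewrite -eE in hN.
have hM : (M %| `|dl|)%N.
  apply: prod_dvd => // q qin.
  have pq' : prime q by move/allP: aq; apply.
  have qN : (q%:Z %| N%:Z)%Z by rewrite /N /M (big_rem q qin) /= dvdzE /= mulnCA dvdn_mulr.
  have h1 : (q%:Z %| (1 + a) * dl)%Z.
    have -> : (1 + a) * dl = (Pz p a b (x%:Z + dl) - Pz p a b x%:Z) -
      ((Pz p a b (x%:Z + dl) - Pz p a b x%:Z) - (1 + a) * dl) by ring.
    by rewrite rpredB ?(dvdz_trans qN hN) // Ez_mod //; apply: hfq.
  by case/(@euclidz q _ _ pq'): h1 => // h; move: (nq1 q qin); rewrite h.
have hP : (p ^ n %| `|dl|)%N.
  have [t ht] := @Efact p a b x%:Z dl pp.
  rewrite ht in hN.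
  set G := dl ^+ p.-1 + a + p%:Z * t in hN.
  have nG : ~~ (p%:Z %| G)%Z.
    apply/negP => hG; move/negP: (@U_r p p a dl pp p1 hfp na na1); apply.
    have -> : dl ^+ p.-1 + a = G - p%:Z * t by rewrite /G; ring.
    by rewrite rpredB // dvdz_mulr.
  have : (p%:Z ^+ n %| dl * G)%Z.
    by apply: dvdz_trans hN; rewrite /N PoszM PoszX' dvdz_mulr.
  by rewrite Gauss_dvdzl ?coprimez_of // dvdzE abszX.
have hNd : (N %| `|dl|)%N.
  rewrite /N Gauss_dvd ?hM ?hP // coprimeXl // coprime_prod_primes //.
have : `|dl|%N = 0%N.
  apply/eqP; apply: contraTT hNd => hd; rewrite -lt0n in hd.
  have lt : (`|dl| < N)%N.
    rewrite /dl; case: (leqP x y) => hxy.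
      by rewrite distnEl //; apply: leq_ltn_trans (leq_subr _ _) yN.
    by rewrite distnEr ?(ltnW hxy) //; apply: leq_ltn_trans (leq_subr _ _) xN.
  by apply/negP => h; have := dvdn_leq hd h; rewrite leqNgt lt.
move/eqP; rewrite absz_eq0 /dl subr_eq0 eqz_nat => /eqP //.
Qed.

Lemma dvdz_natX (p j d : nat) : ((p%:Z) ^+ j %| d%:Z)%Z = (p ^ j %| d)%N.
Proof. by rewrite dvdzE abszX. Qed.

Lemma case_data (p n : nat) (qs : seq nat) (d : nat) :
  prime p -> uniq qs -> all prime qs -> p \notin qs ->
  (0 < d)%N -> (d < p ^ n * \prod_(q <- qs) q)%N ->
  (exists j (S : nat), [/\ (p ^ n * \prod_(q <- qs) q)%N%:Z = p%:Z ^+ j * (p%:Z * S%:Z), S%:Z != 0,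
        (p%:Z ^+ j %| d%:Z)%Z & ~~ (p%:Z ^+ j.+1 %| d%:Z)%Z]) \/
  (exists q (T : nat), [/\ q \in qs, (p ^ n * \prod_(q <- qs) q)%N%:Z = q%:Z * T%:Z, coprimez q%:Z T%:Z,
        T%:Z != 0 & ~~ (q%:Z %| d%:Z)%Z]).
Proof.
move=> pp uq aq pq d0 dN.
have M0 := @prod_primes_gt0 qs aq.
case hpd: (p ^ n %| d)%N.
  right.
  have : has (predC (fun q => q %| d)%N) qs.
    rewrite has_predC; apply/negP => /allP hall.
    have hM : (\prod_(q <- qs) q %| d)%N by apply: prod_dvd.
    have : (p ^ n * \prod_(q <- qs) q %| d)%N.
      by rewrite Gauss_dvd ?hpd ?hM // coprimeXl // coprime_prod_primes.
    by move/(dvdn_leq d0); rewrite leqNgt dN.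
  case/hasP => q qin /= nqd.
  have pq' : prime q by move/allP: aq; apply.
  have [e cq] := @prod_split qs q uq aq qin.
  exists q, (p ^ n * \prod_(i <- rem q qs) i)%N; split => //.
  - by rewrite e -PoszM mulnCA.
  - rewrite coprimezE /= coprimeMr cq andbT coprimeXr // prime_coprime // dvdn_prime2 //.
    by apply/eqP => eqp; move: pq; rewrite -eqp qin.
  - rewrite eqz_nat -lt0n muln_gt0 expn_gt0 prime_gt0 //= prod_primes_gt0 //.
    by apply/allP => x /mem_rem; move/allP: aq; apply.
left.
set j := logn p d.
have jn : (j < n)%N by rewrite ltnNge -(pfactor_dvdn _ pp d0) hpd.
exists j, (p ^ (n - j.+1) * \prod_(q <- qs) q)%N; split.
- rewrite -!PoszX' -!PoszM; congr Posz.
  by rewrite !mulnA -expnSr -expnD subnKC.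
- by rewrite eqz_nat -lt0n muln_gt0 expn_gt0 prime_gt0.
- by rewrite dvdz_natX pfactor_dvdnn.
- by rewrite dvdz_natX pfactor_dvdn // ltnn.
Qed.

Theorem theorem1 (R : realType) (p n : nat) (qs : seq nat) (a b u l : int) :
  prime p -> (3 <= p)%N -> (2 <= n)%N ->
  uniq qs -> all prime qs -> p \notin qs ->
  (forall q, q \in qs -> (q.-1 %| p.-1)%N) ->
  ~~ (p%:Z %| a)%Z -> ~~ (p%:Z %| a + 1)%Z ->
  (forall q, q \in qs -> ~~ (q%:Z %| a + 1)%Z) ->
  let N := (p ^ n * \prod_(q <- qs) q)%N in
  coprimez u N%:Z ->
  let PP := ppmap N p a b in
  let s := zc R N u l in
  (* pi permutes Z_N *)
  {in gtn N &, injective PP} /\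
  (* (i) s o pi is CAZAC *)
  CAZAC N (fun k => s (PP k)) /\
  (* (ii) s o pi^{-1} is CAZAC, pi^{-1} being the inverse permutation of Z_N *)
  (forall sigma : nat -> nat,
     (forall k, (k < N)%N -> (sigma k < N)%N /\ PP (sigma k) = k) ->
     CAZAC N (fun k => s (sigma k))).
Proof.
move=> pp p3 n2 uq aq pq qdiv na na1' nq1' N cu PP s.
have na1 : ~~ (p%:Z %| 1 + a)%Z by rewrite addrC.
have nq1 : forall q, q \in qs -> ~~ (q%:Z %| 1 + a)%Z by move=> q qin; rewrite addrC nq1'.
have p0 := prime_gt0 pp; have p1 := prime_gt1 pp.
have N0 : (0 < N)%N by rewrite /N muln_gt0 expn_gt0 p0 prod_primes_gt0.
have hfp : forall z : int, (p%:Z %| z ^+ p - z)%Z by move=> z; apply: fermat.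
have hfq : forall q, q \in qs -> forall z : int, (q%:Z %| z ^+ p - z)%Z.
  move=> q qin z; apply: fermat_gen => //; last exact: qdiv.
  by move/allP: aq; apply.
have npu : ~~ (p%:Z %| u)%Z.
  apply: (@not_dvd_u p u N%:Z pp cu); rewrite /N PoszM dvdz_mulr // PoszX' dvdz_exp //.
  by rewrite -(subnKC n2).
have nqu : forall q, q \in qs -> ~~ (q%:Z %| u)%Z.
  move=> q qin; have pq' : prime q by move/allP: aq; apply.
  apply: (@not_dvd_u q u N%:Z pq' cu); rewrite /N dvdzE /= (big_rem q qin) /= mulnCA dvdn_mulr //.
set c := (N %% 2)%N%:Z + 2 * l.
have hc : (2 %| N%:Z + c)%Z := par2 N l.
have sE : forall m, s m = ez R N (u * Fz c m%:Z) by move=> m; rewrite /s zc_ez.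
have ezF : forall X Y : int, (N%:Z %| X - Y)%Z -> ez R N (u * Fz c X) = ez R N (u * Fz c Y).
  move=> X Y h; apply: ez_per => //; rewrite -mulrBr; apply: dvdz_mull; exact: Fper.
have sPP : forall k : nat, s (PP k) = ez R N (u * Fz c (Pz p a b k%:Z)).
  by move=> k; rewrite sE; apply: ezF; apply: PP_cong.
have inj : {in gtn N &, injective PP}.
  move=> x y hx hy e; apply: (@inj_core p n qs a b x y) => //.
  have := (@PP_eq N p a b x y N0).1 e.
  by rewrite -opprB rpredN.
split; first exact: inj.
have hPc : forall X Y : int, (N%:Z %| X - Y)%Z -> (N%:Z %| Pz p a b X - Pz p a b Y)%Z.
  by move=> X Y; apply: Pz_cong.
have modN : forall k d : nat, (N%:Z %| ((k + d) %% N)%N%:Z - (k%:Z + d%:Z))%Z.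
  move=> k d; apply/dvdzP; exists (- ((k + d) %/ N)%N%:Z).
  have e' : (k + d)%N%:Z = ((k + d) %/ N)%N%:Z * N%:Z + ((k + d) %% N)%N%:Z.
    by rewrite {1}(divn_eq (k + d) N) PoszD PoszM.
  by rewrite -PoszD e'; ring.
split.
  split; first by move=> k _; rewrite sPP ez_norm.
  move=> d d0 dN; rewrite /autocorr.
  have -> : \sum_(k < N) s (PP k) * (s (PP ((k + d) %% N)%N))^* =
     \sum_(k < N) ez R N (u * Fz c (Pz p a b k) - u * Fz c (Pz p a b (k%:Z + d%:Z))).
    apply: eq_bigr => k _; rewrite !sPP.
    have -> : ez R N (u * Fz c (Pz p a b ((k + d) %% N)%N%:Z)) =
              ez R N (u * Fz c (Pz p a b ((nat_of_ord k)%:Z + d%:Z))).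
      by apply: ezF; apply: hPc; apply: modN.
    by rewrite ez_conj' -ezD.
  have [[j [S [NZ S0 dj nd]]] | [q [T [qin NZ cq T0 nqd]]]] := @case_data p n qs d pp uq aq pq d0 dN.
  - apply: (@core_i R N S u c d%:Z (Pz p a b) N0 hc hPc).
    + by move=> k; rewrite PzD2; apply: (@pD2 p j).
    + by move=> k; apply: (@pI2 p j).
    + by apply: (@pI3 p j).
  - have pq' : prime q by move/allP: aq; apply.
    have nT : ~~ (q%:Z %| T%:Z)%Z.
      apply/negP => h; have : (q%:Z %| gcdz q%:Z T%:Z)%Z by rewrite dvdz_gcd dvdzz.
      move: cq; rewrite /coprimez => /eqP ->; rewrite dvdzE /= dvdn1 => /eqP q1.
      by move: pq'; rewrite q1.
    apply: (@core_i R N T u c d%:Z (Pz p a b) N0 hc hPc).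
    + by move=> k; rewrite PzD2; apply: (@qD2 p q _ T%:Z _ _ pp (hfq q qin)).
    + by move=> k; apply: (@qI2 p q a b _ T%:Z _ _ pp (hfq q qin)).
    + by apply: (@qI3 p q a b u _ T%:Z _ pp pq' (hfq q qin)) => //; [exact: nq1 | exact: nqu].
move=> sigma hsig; split; first by move=> k kN; rewrite sE ez_norm.
move=> d d0 dN; rewrite /autocorr.
have sigPP : forall w, (w < N)%N -> sigma (PP w) = w.
  move=> w wN; have [h1 h2] := hsig (PP w) (@PP_lt N p a b w N0).
  by apply: inj => //; rewrite inE.
set y := fun x : nat => sigma ((PP x + d) %% N)%N.
have yspec : forall x, (y x < N)%N /\ (N%:Z %| Pz p a b (y x)%:Z - Pz p a b x%:Z - d%:Z)%Z.
  move=> x; have [h1 h2] := hsig ((PP x + d) %% N)%N (ltn_pmod _ N0).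
  by split => //; apply/(@PP_eqd N p a b _ _ d N0).
have hyd : forall x : nat, (N%:Z %| Pz p a b (x%:Z + ((y x)%:Z - x%:Z)) - Pz p a b x%:Z - d%:Z)%Z.
  move=> x; have -> : x%:Z + ((y x)%:Z - x%:Z) = (y x)%:Z by ring.
  by case: (yspec x).
have hy : forall x, y (x + N)%N = y x.
  move=> x; rewrite /y; congr (sigma ((_ + d) %% N)%N).
  apply/(@PP_eq N p a b _ _ N0); apply: hPc; rewrite PoszD; apply/dvdzP; exists 1; ring.
have h1gen : forall S : nat,
   (forall x : nat, (N%:Z %| (x%:Z + ((y x)%:Z - x%:Z) + S%:Z) ^+ p - (x%:Z + ((y x)%:Z - x%:Z)) ^+ p
                            - (x%:Z + S%:Z) ^+ p + x%:Z ^+ p)%Z) ->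
   forall x, (N%:Z %| (y (x + S)%N)%:Z - ((y x)%:Z + S%:Z))%Z.
  move=> S hD x.
  set z := y x; set w := ((z + S) %% N)%N.
  have hw : (PP w = (PP (x + S) + d) %% N)%N.
    apply/(@PP_eqd N p a b _ _ d N0).
    have -> : Pz p a b w%:Z - Pz p a b (x + S)%N%:Z - d%:Z =
      (Pz p a b w%:Z - Pz p a b (z%:Z + S%:Z)) +
      (Pz p a b (x%:Z + ((y x)%:Z - x%:Z) + S%:Z) - Pz p a b (x%:Z + ((y x)%:Z - x%:Z))
        - (Pz p a b (x%:Z + S%:Z) - Pz p a b x%:Z))
      + (Pz p a b (x%:Z + ((y x)%:Z - x%:Z)) - Pz p a b x%:Z - d%:Z).
      rewrite (addrC x%:Z) subrK PoszD /z; ring.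
    apply: rpredD; last exact: hyd.
    apply: rpredD; last by rewrite PzD2; apply: hD.
    by apply: hPc; apply: modN.
  have -> : y (x + S)%N = w.
    by rewrite /y -hw sigPP // /w ltn_pmod.
  by apply: modN.
have hsum : \sum_(k < N) s (sigma k) * (s (sigma ((k + d) %% N)%N))^* =
    \sum_(x < N) ez R N (u * Fz c x%:Z - u * Fz c (y x)%:Z).
  pose h := fun x : 'I_N => Ordinal (@PP_lt N p a b x N0).
  have hinj : injective h.
    move=> x1 x2 /(congr1 val) /= e; apply: val_inj; apply: inj => //; rewrite inE ltn_ord //.
  rewrite (reindex_inj hinj) /=; apply: eq_bigr => x _.
  rewrite sigPP ?ltn_ord // !sE ez_conj' -ezD.
  by congr ez; rewrite /y.
rewrite hsum.
have [[j [S [NZ S0 dj nd]]] | [q [T [qin NZ cq T0 nqd]]]] := @case_data p n qs d pp uq aq pq d0 dN.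
- have K1 : forall x : nat, (p%:Z ^+ j %| (y x)%:Z - x%:Z)%Z && ~~ (p%:Z ^+ j.+1 %| (y x)%:Z - x%:Z)%Z.
    by move=> x; apply: (@pK1 p j a b N%:Z S%:Z d%:Z x%:Z).
  have NZ' : N%:Z = S%:Z * p%:Z ^+ j.+1 by rewrite NZ exprSr; ring.
  apply: (@core_ii R N S u c y N0 hc hy).
  + apply: h1gen => x; apply: (@pD2 p j N%:Z S%:Z) => //.
    by case/andP: (K1 x).
  + move=> x; rewrite NZ'; apply: dvdz_mul => //.
    have K2 := @pK2 p j a b N%:Z S%:Z d%:Z x%:Z ((y x)%:Z - x%:Z) 0%N%:Z ((y 0%N)%:Z - 0%N%:Z)
      pp NZ na na1 dj nd (hyd x) (hyd 0%N).
    by move: K2; rewrite subr0.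
  + rewrite NZ' mulrCA dvdz_mul2l // mulrC Gauss_dvdzl; last exact: coprimez_of.
    by have /andP[_] := K1 0%N; rewrite subr0.
- have pq' : prime q by move/allP: aq; apply.
  have NZ' : N%:Z = T%:Z * q%:Z by rewrite NZ mulrC.
  have qK' : forall x : nat, (q%:Z %| (1 + a) * ((y x)%:Z - x%:Z) - d%:Z)%Z.
    by move=> x; apply: (@qK p q a b N%:Z T%:Z d%:Z x%:Z _ (hfq q qin) NZ (hyd x)).
  apply: (@core_ii R N T u c y N0 hc hy).
  + apply: h1gen => x; exact: (@qD2 p q N%:Z T%:Z _ _ pp (hfq q qin)).
  + move=> x; rewrite NZ'; apply: dvdz_mul => //.
    have : (q%:Z %| (1 + a) * (((y x)%:Z - x%:Z) - (y 0%N)%:Z))%Z.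
      have := qK' 0%N; rewrite subr0 => h0.
      have -> : (1 + a) * ((y x)%:Z - x%:Z - (y 0%N)%:Z) =
        ((1 + a) * ((y x)%:Z - x%:Z) - d%:Z) - ((1 + a) * (y 0%N)%:Z - d%:Z) by ring.
      by rewrite rpredB // qK'.
    by case/(@euclidz q _ _ pq') => // h; move: (nq1 q qin); rewrite h.
  + rewrite NZ' mulrCA dvdz_mul2l //; apply/negP => /(@euclidz q _ _ pq') [hu|hy0].
      by move: (nqu q qin); rewrite hu.
    move/negP: nqd; apply.
    have := qK' 0%N; rewrite subr0 => h0.
    have -> : d%:Z = (1 + a) * (y 0%N)%:Z - ((1 + a) * (y 0%N)%:Z - d%:Z) by ring.
    by rewrite rpredB // dvdz_mull.
Qed.
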